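(* Let $H=(V,E)$ be a contextuality scenario with $|E|=m$ and $\max_{e\in E}|e|=d$. Then there is a rule $r$ on the bipartite Bell scenario $B_{2,m,d}$ (two players, each with $m$ measurements having $d$ outcomes each) such that $H$ is a conditional contextuality scenario of the game $(B_{2,m,d})_r$; i.e. $H$ has a $2$-partite conditional interpretation as a game on $B_{2,m,d}$.
   Context: A contextuality scenario is a hypergraph $H=(V,E)$ (finite $V$, $E$ a set of subsets of $V$) with $V=\bigcup_{e\in E}e$. A probabilistic model on $H$ is a function $p:V\to[0,1]$ with $\sum_{v\in e}p(v)=1$ for all $e\in E$; $\mathcal{G}(H)$ denotes the set of such models. For $W\subseteq V$, the induced sub-hypergraph is $H_W=(W,\{e\cap W:e\in E\})$. Conditional contextuality: given hypergraphs $H=(V,E)$ and $H'=(V',E')$, $H'$ is a conditional contextuality scenario of $H$ if there is an injection $\phi:V'\to V$ such that (i) for all $p\in\mathcal{G}(H)$, $p\circ\phi\in\mathcal{G}(H')$, and (ii) for all $p'\in\mathcal{G}(H')$ there exists $p\in\mathcal{G}(H)$ with $p\circ\phi=p'$. Foulis–Randall product: for hypergraphs $H_A=(V_A,E_A)$, $H_B=(V_B,E_B)$, let $E_{A\to B}=\{\bigcup_{a\in e_A}(\{a\}\times f(a)) : e_A\in E_A,\ f:e_A\to E_B\}$ and $E_{A\gets B}=\{\bigcup_{b\in e_B}(g(b)\times\{b\}) : e_B\in E_B,\ g:e_B\to E_A\}$; then $H_A\otimes H_B=(V_A\times V_B,\ E_{A\to B}\cup E_{A\gets B})$. Bipartite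 game: let $B_1=(V_1,E_1)$, $B_2=(V_2,E_2)$ be hypergraphs whose edges are pairwise disjoint and cover the vertex set, and $H=(V,E)=B_1\otimes B_2$. Edges of the form $e_1\times e_2$ with $e_i\in E_i$ are called questions; $Q_E$ is the set of questions. A rule is a function $r:Q_E\to\mathcal{P}(V)$ with $r(e)\subseteq e$ for all $e\in Q_E$. With $W_r=\bigcup_{e\in Q_E}r(e)$, the game on $H$ under rule $r$ is $H_r=H_{W_r}=(W_r,\{e\cap W_r:e\in E\})$. $B_{2,m,d}$ denotes $B\otimes B$ where $B$ is the hypergraph with vertex set $\{x|a: x\in\{1,\dots,m\},\ a\in\{1,\dots,d\}\}$ and the $m$ disjoint edges $\{x|a: a\in\{1,\dots,d\}\}$, $x=1,\dots,m$. A game on $B_{2,m,d}$ is $(B_{2,m,d})_r$ for some rule $r$. *)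

(* Defs.v *)
From mathcomp Require Import all_boot all_order all_algebra.
From mathcomp Require Import reals.
Set Implicit Arguments. Unset Strict Implicit. Unset Printing Implicit Defensive.
Import Order.TTheory GRing.Theory Num.Theory.
Local Open Scope ring_scope.

Record hypergraph (T : finType) := Hypergraph {
  hverts : {set T};
  hedges : {set {set T}} }.

(* Probabilistic models: p : T -> R, only its values on the vertex set matter. *)
Definition prob_model (R : realType) (T : finType) (H : hypergraph T) (p : T -> R) : Prop :=
  (forall v, v \in hverts H -> 0 <= p v <= 1) /\
  (forall e, e \in hedges H -> \sum_(v in e) p v = 1).

Definition induced (T : finType) (H : hypergraph T) (W : {set T}) : hypergraph T :=
  Hypergraph W [set e :&: W | e in hedges H].

Definition cond_scenario (R : realType) (T' T : finType)
    (H' : hypergraph T') (H : hypergraph T) : Prop :=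
  exists phi : T' -> T,
    [/\ {in hverts H' &, injective phi},
        {in hverts H', forall v, phi v \in hverts H},
        (forall p : T -> R, prob_model H p -> prob_model H' (p \o phi)) &
        (forall p' : T' -> R, prob_model H' p' ->
           exists p : T -> R, prob_model H p /\ {in hverts H', p \o phi =1 p'})].

Definition edges_AtoB (TA TB : finType) (HA : hypergraph TA) (HB : hypergraph TB)
  : {set {set (TA * TB)%type}} :=
  [set S : {set (TA * TB)%type} | [exists eA in hedges HA, exists f : {ffun TA -> {set TB}},
      [forall a in eA, f a \in hedges HB] &&
      (S == [set v : TA * TB | (v.1 \in eA) && (v.2 \in f v.1)])]].

Definition edges_AfromB (TA TB : finType) (HA : hypergraph TA) (HB : hypergraph TB)
  : {set {set (TA * TB)%type}} :=
  [set S : {set (TA * TB)%type} | [exists eB in hedges HB, exists g : {ffun TB -> {set TA}},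
      [forall b in eB, g b \in hedges HA] &&
      (S == [set v : TA * TB | (v.2 \in eB) && (v.1 \in g v.2)])]].

Definition fr_prod (TA TB : finType) (HA : hypergraph TA) (HB : hypergraph TB)
  : hypergraph (TA * TB)%type :=
  Hypergraph (setX (hverts HA) (hverts HB)) (edges_AtoB HA HB :|: edges_AfromB HA HB).

Definition questions (TA TB : finType) (HA : hypergraph TA) (HB : hypergraph TB)
  : {set {set (TA * TB)%type}} :=
  [set setX e1 e2 | e1 in hedges HA, e2 in hedges HB].

Definition is_rule (TA TB : finType) (HA : hypergraph TA) (HB : hypergraph TB)
  (r : {set (TA * TB)%type} -> {set (TA * TB)%type}) : Prop :=
  forall q, q \in questions HA HB -> r q \subset q.

Definition rule_support (TA TB : finType) (HA : hypergraph TA) (HB : hypergraph TB)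
  (r : {set (TA * TB)%type} -> {set (TA * TB)%type}) : {set (TA * TB)%type} :=
  \bigcup_(q in questions HA HB) r q.

Definition game (TA TB : finType) (HA : hypergraph TA) (HB : hypergraph TB)
  (r : {set (TA * TB)%type} -> {set (TA * TB)%type}) : hypergraph (TA * TB)%type :=
  induced (fr_prod HA HB) (rule_support HA HB r).

(* The single-party scenario B: vertices x|a ~ (x,a), edges {x|a : a} *)
Definition Bscen (m d : nat) : hypergraph ('I_m * 'I_d)%type :=
  Hypergraph [set: 'I_m * 'I_d] [set [set (x, a) | a : 'I_d] | x : 'I_m].

Definition B2 (m d : nat) := fr_prod (Bscen m d) (Bscen m d).

(* Main.v *)
Require Import Defs.
From mathcomp Require Import all_boot all_order all_algebra.
From mathcomp Require Import reals.
From mathcomp Require Import ring lra.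
Set Implicit Arguments. Unset Strict Implicit. Unset Printing Implicit Defensive.
Import Order.TTheory GRing.Theory Num.Theory.
Local Open Scope ring_scope.

Section Main.
Variables (R : realType) (V : finType) (E : {set {set V}}) (m d : nat).
Variable ex : 'I_m -> {set V}.
Variable idx : 'I_m -> V -> 'I_d.
Variable xof : V -> 'I_m.
Hypothesis exE : forall x, ex x \in E.
Hypothesis Eex : forall e, e \in E -> exists x, e = ex x.
Hypothesis xofP : forall u, u \in ex (xof u).
Hypothesis idx_inj : forall x, {in ex x &, injective (idx x)}.

Local Notation T := ('I_m * 'I_d)%type.
Local Notation B := (Bscen m d).

Definition row (x : 'I_m) : {set T} := [set (x, a) | a : 'I_d].
Definition lab x a := [pick u | (u \in ex x) && (idx x u == a)].
Definition good (z : T * T) : bool :=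
  match lab z.1.1 z.1.2, lab z.2.1 z.2.2 with
  | Some u, Some w => ((u \in ex z.2.1) || (w \in ex z.1.1)) ==> (u == w)
  | _, _ => false end.
Definition Wset : {set T * T} := [set z | good z].
Definition rr (q : {set T * T}) := q :&: Wset.
Definition phi (u : V) : T * T := ((xof u, idx (xof u) u), (xof u, idx (xof u) u)).

Lemma labP x a u : lab x a = Some u -> u \in ex x /\ idx x u = a.
Proof. by rewrite /lab; case: pickP => // u' /andP [H1 /eqP H2] [<-]. Qed.

Lemma lab_idx x u : u \in ex x -> lab x (idx x u) = Some u.
Proof.
move=> Hu; rewrite /lab; case: pickP => [u' /andP [H1 /eqP H2]|].
  by rewrite (idx_inj H1 Hu H2).
by move/(_ u); rewrite Hu eqxx.
Qed.

Lemma memW z : (z \in rule_support B B rr) = good z.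
Proof.
apply/idP/idP.
  by case/bigcupP => q _; rewrite /rr !inE => /andP [].
move=> Hz; apply/bigcupP; exists (setX (row z.1.1) (row z.2.1)).
  by apply/imset2P; exists (row z.1.1) (row z.2.1) => //; apply: imset_f.
rewrite /rr !inE Hz andbT; case: z Hz => [[x a] [y b]] /= _.
by apply/andP; split; apply: imset_f.
Qed.

Lemma sum_row y (F : T -> R) : \sum_(v in row y) F v = \sum_b F (y, b).
Proof.
rewrite big_imset /=; last by move=> a b _ _ [].
by apply: eq_bigl.
Qed.

Lemma sum_AtoB (F : T * T -> R) x (f : {ffun T -> {set T}}) (g : 'I_d -> 'I_m) :
  (forall a, f (x, a) = row (g a)) ->
  \sum_(v in [set v : T * T | (v.1 \in row x) && (v.2 \in f v.1)]) F v
  = \sum_a \sum_b F ((x, a), (g a, b)).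
Proof.
move=> Hf.
transitivity (\sum_(v | (v.1 \in row x) && (v.2 \in f v.1)) F (v.1, v.2)).
  by apply: eq_big => [v|[v1 v2] _]; rewrite ?inE.
rewrite -(@pair_big_dep _ _ _ _ _ (fun v1 => v1 \in row x) (fun v1 v2 => v2 \in f v1)
   (fun v1 v2 => F (v1, v2))) /=.
rewrite sum_row; apply: eq_bigr => a _.
by rewrite Hf sum_row.
Qed.

Lemma sum_AfromB (F : T * T -> R) y (f : {ffun T -> {set T}}) (g : 'I_d -> 'I_m) :
  (forall b, f (y, b) = row (g b)) ->
  \sum_(v in [set v : T * T | (v.2 \in row y) && (v.1 \in f v.2)]) F v
  = \sum_b \sum_a F ((g b, a), (y, b)).
Proof.
move=> Hf.
rewrite (reindex_inj (h := fun v : T * T => (v.2, v.1))); last first.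
  by move=> [? ?] [? ?] [-> ->].
rewrite -(sum_AtoB (fun v => F (v.2, v.1)) Hf).
by apply: eq_bigl => v; rewrite !inE.
Qed.

Lemma inBedge e : e \in hedges B -> exists x, e = row x.
Proof. by case/imsetP => x _ ->; exists x. Qed.

Lemma rowB x : row x \in hedges B.
Proof. exact: imset_f. Qed.

Lemma AtoB_sum (F : T * T -> R) S : S \in edges_AtoB B B ->
  exists x (g : 'I_d -> 'I_m), \sum_(v in S) F v = \sum_a \sum_b F ((x, a), (g a, b)).
Proof.
rewrite inE => /existsP [eA /andP [HeA /existsP [f /andP [/forallP Hf /eqP ->]]]].
case: (inBedge HeA) => x Hx; subst eA.
exists x, (fun a => odflt x [pick y | f (x, a) == row y]).
apply: sum_AtoB => a.
have := Hf (x, a); rewrite imset_f //= => /inBedge [y Hy].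
case: pickP => [y' /eqP //|/(_ y)]; by rewrite Hy eqxx.
Qed.

Lemma AfromB_sum (F : T * T -> R) S : S \in edges_AfromB B B ->
  exists y (g : 'I_d -> 'I_m), \sum_(v in S) F v = \sum_b \sum_a F ((g b, a), (y, b)).
Proof.
rewrite inE => /existsP [eB /andP [HeB /existsP [f /andP [/forallP Hf /eqP ->]]]].
case: (inBedge HeB) => y Hy; subst eB.
exists y, (fun b => odflt y [pick x | f (y, b) == row x]).
apply: sum_AfromB => b.
have := Hf (y, b); rewrite imset_f //= => /inBedge [x Hx].
case: pickP => [x' /eqP //|/(_ x)]; by rewrite Hx eqxx.
Qed.

Lemma AtoB_ex x (g : 'I_d -> 'I_m) : exists2 S, S \in edges_AtoB B B &
  forall F : T * T -> R, \sum_(v in S) F v = \sum_a \sum_b F ((x, a), (g a, b)).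
Proof.
pose f := [ffun v : T => row (g v.2)].
exists [set v : T * T | (v.1 \in row x) && (v.2 \in f v.1)].
  rewrite inE; apply/existsP; exists (row x); rewrite rowB /=.
  apply/existsP; exists f; rewrite eqxx andbT; apply/forallP => v.
  by apply/implyP => _; rewrite ffunE rowB.
by move=> F; apply: sum_AtoB => a; rewrite ffunE.
Qed.

Lemma AfromB_ex y (g : 'I_d -> 'I_m) : exists2 S, S \in edges_AfromB B B &
  forall F : T * T -> R, \sum_(v in S) F v = \sum_b \sum_a F ((g b, a), (y, b)).
Proof.
pose f := [ffun v : T => row (g v.2)].
exists [set v : T * T | (v.2 \in row y) && (v.1 \in f v.2)].
  rewrite inE; apply/existsP; exists (row y); rewrite rowB /=.
  apply/existsP; exists f; rewrite eqxx andbT; apply/forallP => v.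
  by apply/implyP => _; rewrite ffunE rowB.
by move=> F; apply: sum_AfromB => b; rewrite ffunE.
Qed.


Lemma R1 x (Q : 'I_d -> R) : (forall a, lab x a = None -> Q a = 0) ->
  \sum_a Q a = \sum_(u in ex x) Q (idx x u).
Proof.
move=> HQ.
have -> : \sum_(u in ex x) Q (idx x u) = \sum_(a in idx x @: ex x) Q a.
  by rewrite big_imset //; move=> u1 u2 H1 H2; apply: idx_inj.
rewrite [LHS](bigID (fun a => a \in idx x @: ex x)) /= [X in _ + X]big1 ?addr0 //.
move=> a Ha; apply: HQ; case E': (lab x a) => [u|//].
by have [Hu Hua] := labP E'; move: Ha; rewrite -Hua imset_f.
Qed.

Lemma good_phi u : good (phi u).
Proof. by rewrite /good /= lab_idx // eqxx implybT. Qed.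

Lemma sum_SW (F : T * T -> R) S : (forall z, ~~ good z -> F z = 0) ->
  \sum_(v in S :&: rule_support B B rr) F v = \sum_(v in S) F v.
Proof.
move=> HF; rewrite big_mkcond [RHS]big_mkcond; apply: eq_bigr => v _.
rewrite inE memW; case: (v \in S) => //=; case: (boolP (good v)) => // Hv.
by rewrite HF.
Qed.

Section Dir1.
Variable P : T * T -> R.
Hypothesis HP0 : forall z, ~~ good z -> P z = 0.
Hypothesis H1 : forall x (g : 'I_d -> 'I_m), \sum_a \sum_b P ((x, a), (g a, b)) = 1.
Hypothesis H2 : forall y (g : 'I_d -> 'I_m), \sum_b \sum_a P ((g b, a), (y, b)) = 1.

Lemma NS_A x a y y' : \sum_b P ((x, a), (y, b)) = \sum_b P ((x, a), (y', b)).
Proof.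
have h1 := H1 x (fun _ => y).
have h2 := H1 x (fun a' => if a' == a then y' else y).
rewrite (bigD1 a) //= in h1; rewrite (bigD1 a) //= eqxx in h2.
have e : \sum_(i < d | i != a) \sum_b P ((x, i), (if i == a then y' else y, b))
   = \sum_(i < d | i != a) \sum_b P ((x, i), (y, b)).
  by apply: eq_bigr => i /negbTE ->.
rewrite e in h2; apply: (addIr (\sum_(i < d | i != a) \sum_b P ((x, i), (y, b)))).
by rewrite h1 h2.
Qed.

Lemma NS_B y b x x' : \sum_a P ((x, a), (y, b)) = \sum_a P ((x', a), (y, b)).
Proof.
have h1 := H2 y (fun _ => x).
have h2 := H2 y (fun b' => if b' == b then x' else x).
rewrite (bigD1 b) //= in h1; rewrite (bigD1 b) //= eqxx in h2.
have e : \sum_(i < d | i != b) \sum_a P ((if i == b then x' else x, a), (y, i))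
   = \sum_(i < d | i != b) \sum_a P ((x, a), (y, i)).
  by apply: eq_bigr => i /negbTE ->.
rewrite e in h2; apply: (addIr (\sum_(i < d | i != b) \sum_a P ((x, a), (y, i)))).
by rewrite h1 h2.
Qed.

Lemma L1 x y u : u \in ex x -> u \in ex y ->
  \sum_b P ((x, idx x u), (y, b)) = P ((x, idx x u), (y, idx y u)).
Proof.
move=> Hx Hy; rewrite (bigD1 (idx y u)) //= big1 ?addr0 // => b Hb.
apply: HP0; rewrite /good /= lab_idx //; case E': (lab y b) => [w|//].
have [Hw Hb'] := labP E'; rewrite Hy /=; apply/eqP => Huw; subst w.
by move: Hb; rewrite -Hb' eqxx.
Qed.

Lemma L2 x y u : u \in ex x -> u \in ex y ->
  \sum_a P ((x, a), (y, idx y u)) = P ((x, idx x u), (y, idx y u)).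
Proof.
move=> Hx Hy; rewrite (bigD1 (idx x u)) //= big1 ?addr0 // => a Ha.
apply: HP0; rewrite /good /= (lab_idx Hy); case E': (lab x a) => [w|//].
have [Hw Ha'] := labP E'; rewrite Hx orbT /=; apply/eqP => Huw; subst w.
by move: Ha; rewrite -Ha' eqxx.
Qed.

Lemma diag x y u : u \in ex x -> u \in ex y ->
  P ((x, idx x u), (x, idx x u)) = P ((y, idx y u), (y, idx y u)).
Proof.
move=> Hx Hy.
by rewrite -(L1 Hx Hx) (NS_A _ _ x y) (L1 Hx Hy) -(L2 Hx Hy) (NS_B _ _ x y) (L2 Hy Hy).
Qed.

Lemma dir1_core e : e \in E -> \sum_(u in e) P (phi u) = 1.
Proof.
move=> /Eex [x ->].
transitivity (\sum_(u in ex x) P ((x, idx x u), (x, idx x u))).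
  by apply: eq_bigr => u Hu; rewrite /phi (diag (xofP u) Hu).
rewrite -(R1 (Q := fun a => P ((x, a), (x, a)))); last first.
  by move=> a Ha; apply: HP0; rewrite /good /= Ha.
rewrite -(H1 x (fun _ => x)); apply: eq_bigr => a _.
case E': (lab x a) => [u|].
  by have [Hu <-] := labP E'; rewrite L1.
rewrite HP0; last by rewrite /good /= E'.
by rewrite big1 // => b _; apply: HP0; rewrite /good /= E'.
Qed.
End Dir1.

Lemma dir1 (p : T * T -> R) : prob_model (game B B rr) p ->
  prob_model (Hypergraph [set: V] E) (p \o phi).
Proof.
move=> [Hv He].
pose P v := if good v then p v else 0.
have HP0 : forall z, ~~ good z -> P z = 0 by move=> z /negbTE; rewrite /P => ->.
have HS : forall S, S \in edges_AtoB B B :|: edges_AfromB B B -> \sum_(v in S) P v = 1.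
  move=> S HS; rewrite -(sum_SW _ HP0) -(He (S :&: rule_support B B rr)); last first.
    by apply: imset_f.
  by apply: eq_bigr => v; rewrite inE memW /P => /andP [_ ->].
split.
  by move=> v _; apply: Hv => /=; rewrite memW good_phi.
move=> e He'; rewrite -(dir1_core HP0 _ _ He').
- by apply: eq_bigr => u _; rewrite /P good_phi.
- move=> x g; have [S HS1 HS2] := AtoB_ex x g.
  by rewrite -HS2 HS // inE HS1.
- move=> y g; have [S HS1 HS2] := AfromB_ex y g.
  by rewrite -HS2 HS // inE HS1 orbT.
Qed.

Section Dir2.
Variable p : V -> R.
Hypothesis Hv : forall u, 0 <= p u <= 1.
Hypothesis He : forall e, e \in E -> \sum_(u in e) p u = 1.

Definition s x y := \sum_(t in ex x :\: ex y) p t.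

Definition Pg (z : T * T) : R :=
  match lab z.1.1 z.1.2, lab z.2.1 z.2.2 with
  | Some u, Some w => if (u \in ex z.2.1) || (w \in ex z.1.1) then
                        (if u == w then p u else 0)
                      else p u * p w / s z.1.1 z.2.1
  | _, _ => 0 end.

Definition pv x a := if lab x a is Some u then p u else 0.

Lemma p_ge0 u : 0 <= p u. Proof. by case/andP: (Hv u). Qed.

Lemma s_ge0 x y : 0 <= s x y.
Proof. by apply: sumr_ge0 => t _; apply: p_ge0. Qed.

Lemma s_sym x y : s x y = s y x.
Proof.
have hx := He (exE x); have hy := He (exE y).
rewrite (big_setID (ex y)) in hx; rewrite (big_setID (ex x)) setIC in hy.
rewrite /s; apply: (addrI (\sum_(i in ex x :&: ex y) p i)).
by rewrite hx hy.
Qed.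

Lemma Pg0 z : ~~ good z -> Pg z = 0.
Proof.
rewrite /good /Pg; case: (lab _ _) => [u|//]; case: (lab _ _) => [w|//].
by case: (_ || _) => //= /negbTE ->.
Qed.

Lemma Pg_ge0 z : 0 <= Pg z.
Proof.
rewrite /Pg; case: (lab _ _) => [u|//]; case: (lab _ _) => [w|//].
case: (_ || _); first by case: (_ == _) => //; apply: p_ge0.
by apply: divr_ge0; [apply: mulr_ge0; apply: p_ge0 | apply: s_ge0].
Qed.

Lemma Pg_sym x a y b : Pg ((y, b), (x, a)) = Pg ((x, a), (y, b)).
Proof.
rewrite /Pg /=; case: (lab x a) => [u|]; case: (lab y b) => [w|] //.
rewrite orbC; case: (_ || _).
  by rewrite eq_sym; case: eqP => // ->.
by rewrite s_sym [p w * p u]mulrC.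
Qed.

Lemma margS x u y : u \in ex x -> \sum_b Pg ((x, idx x u), (y, b)) = p u.
Proof.
move=> Hx; case Hy: (u \in ex y).
  rewrite (bigD1 (idx y u)) //= big1 ?addr0.
    by rewrite /Pg /= !lab_idx // Hy /= eqxx.
  move=> b Hb; rewrite /Pg /= lab_idx //; case E': (lab y b) => [w|//].
  have [Hw Hb'] := labP E'; rewrite Hy /=; case: eqP => // Huw; subst w.
  by move: Hb; rewrite -Hb' eqxx.
rewrite (R1 (x := y)); last by move=> b Hb; rewrite /Pg /= Hb; case: (lab x _).
transitivity (\sum_(w in ex y :\: ex x) p w * (p u / s x y)).
  rewrite [RHS]big_mkcond [LHS]big_mkcond; apply: eq_bigr => w _.
  rewrite inE; case Hwy: (w \in ex y) => /=; last by rewrite andbF.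
  rewrite andbT /Pg /= !lab_idx // Hy /=.
  case Hwx: (w \in ex x) => /=.
    by case: eqP => // Huw; subst w; rewrite Hwy in Hy.
  by rewrite mulrA [p u * p w]mulrC.
rewrite -mulr_suml -/(s y x) -s_sym.
have [Hs0|Hs] := eqVneq (s x y) 0.
  have : p u <= s x y.
    rewrite /s (bigD1 u) /=; last by rewrite inE Hy Hx.
    by rewrite lerDl; apply: sumr_ge0 => t _; apply: p_ge0.
  have := p_ge0 u; rewrite Hs0 mul0r; lra.
by rewrite mulrCA divff // mulr1.
Qed.
Lemma margA x a y : \sum_b Pg ((x, a), (y, b)) = pv x a.
Proof.
rewrite /pv; case E': (lab x a) => [u|].
  by have [Hu <-] := labP E'; apply: margS.
by rewrite big1 // => b _; rewrite /Pg /= E'.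
Qed.

Lemma margB x y b : \sum_a Pg ((x, a), (y, b)) = pv y b.
Proof.
rewrite -(margA y b x); apply: eq_bigr => a _; by rewrite Pg_sym.
Qed.

Lemma sum_pv x : \sum_a pv x a = 1.
Proof.
rewrite (R1 (x := x)); last by move=> a Ha; rewrite /pv Ha.
rewrite -(He (exE x)); apply: eq_bigr => u Hu; by rewrite /pv lab_idx.
Qed.

Lemma pv_bounds x a : 0 <= pv x a <= 1.
Proof. by rewrite /pv; case: (lab x a) => [u|]; [apply: Hv | rewrite lexx ler01]. Qed.

Lemma Pg_le1 z : Pg z <= 1.
Proof.
case: z => [[x a] [y b]]; have := margA x a y; rewrite (bigD1 b) //= => H.
have h1 := pv_bounds x a.
have h2 : 0 <= \sum_(i < d | i != b) Pg ((x, a), (y, i)).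
  by apply: sumr_ge0 => i _; apply: Pg_ge0.
move/andP: h1 => [h1 h3]; lra.
Qed.

Lemma dir2 : prob_model (game B B rr) Pg /\ {in [set: V], Pg \o phi =1 p}.
Proof.
split; last first.
  by move=> u _ /=; rewrite /Pg /phi /= lab_idx // (xofP u) /= eqxx.
split; first by move=> v _; rewrite Pg_ge0 Pg_le1.
move=> e' /imsetP [S HS ->]; rewrite sum_SW; last exact: Pg0.
move: HS; rewrite inE => /orP [] HS.
  have [x [g ->]] := AtoB_sum Pg HS.
  by rewrite -(sum_pv x); apply: eq_bigr => a _; rewrite margA.
have [y [g ->]] := AfromB_sum Pg HS.
by rewrite -(sum_pv y); apply: eq_bigr => b _; rewrite margB.
Qed.
End Dir2.

Lemma phi_inj : injective phi.
Proof.
move=> u u' [Hx Hi _ _]; move: Hi; rewrite Hx => Hi.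
have Hu : u \in ex (xof u') by rewrite -Hx.
exact: (idx_inj Hu (xofP u') Hi).
Qed.

Lemma main_general : exists r, is_rule B B r /\
  cond_scenario R (Hypergraph [set: V] E) (game B B r).
Proof.
exists rr; split; first by move=> q _; apply: subsetIl.
exists phi; split.
- by move=> u u' _ _; apply: phi_inj.
- by move=> u _ /=; rewrite memW good_phi.
- exact: dir1.
- move=> p' [Hv He]; exists (Pg p').
  have Hv' : forall u, 0 <= p' u <= 1 by move=> u; apply: Hv; rewrite inE.
  exact: (dir2 Hv' He).
Qed.

End Main.

Local Close Scope ring_scope.

Theorem theorem4p1 (R : realType) (V : finType) (E : {set {set V}}) :
  cover E = [set: V] ->
  exists r : {set (('I_#|E| * 'I_(\max_(e in E) #|e|)) *
                   ('I_#|E| * 'I_(\max_(e in E) #|e|)))%type} ->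
             {set (('I_#|E| * 'I_(\max_(e in E) #|e|)) *
                   ('I_#|E| * 'I_(\max_(e in E) #|e|)))%type},
    is_rule (Bscen #|E| (\max_(e in E) #|e|)) (Bscen #|E| (\max_(e in E) #|e|)) r /\
    cond_scenario R (Hypergraph [set: V] E)
      (game (Bscen #|E| (\max_(e in E) #|e|)) (Bscen #|E| (\max_(e in E) #|e|)) r).
Proof.
move=> Hcov.
have Hin : forall u : V, exists2 e, e \in E & u \in e.
  move=> u; have : u \in cover E by rewrite Hcov inE.
  by case/bigcupP => e He Hu; exists e.
set d := \max_(e in E) #|e|.
have led : forall e, e \in E -> #|e| <= d.
  by move=> e He; apply: (leq_bigmax_cond (F := fun e : {set V} => #|e|)).
have dpos : forall u : V, (0 < d)%N.
  move=> u; have [e He Hu] := Hin u; apply: leq_trans (led e He).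
  by apply/card_gt0P; exists u.
have mpos : forall u : V, (0 < #|E|)%N.
  by move=> u; have [e He _] := Hin u; apply/card_gt0P; exists e.
pose ex := fun x : 'I_#|E| => enum_val x.
pose idx := fun (x : 'I_#|E|) (u : V) =>
  insubd (Ordinal (dpos u)) (index u (enum (ex x))) : 'I_d.
pose xof := fun u : V => odflt (Ordinal (mpos u)) [pick x | u \in ex x].
have exE : forall x, ex x \in E by move=> x; apply: enum_valP.
have Eex : forall e, e \in E -> exists x, e = ex x.
  by move=> e He; exists (enum_rank_in He e); rewrite /ex enum_rankK_in.
have xofP : forall u, u \in ex (xof u).
  move=> u; rewrite /xof; case: pickP => [x //|H].
  have [e He Hu] := Hin u; have [x Hx] := Eex e He.
  by move: (H x); rewrite -Hx Hu.
have idx_inj : forall x, {in ex x &, injective (idx x)}.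
  move=> x u1 u2 H1 H2 /(congr1 val); rewrite /idx !val_insubd.
  have lt : forall u, u \in ex x -> (index u (enum (ex x)) < d)%N.
    move=> u Hu; apply: leq_trans (led _ (exE x)).
    by rewrite cardE index_mem mem_enum.
  rewrite !lt // => Hi.
  transitivity (nth u1 (enum (ex x)) (index u1 (enum (ex x)))).
    by rewrite nth_index ?mem_enum.
  by rewrite Hi nth_index ?mem_enum.
exact: (main_general R exE Eex xofP idx_inj).
Qed.
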